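(* Let $r\ge 2$ and $F\in\mathcal{F}_r(n)$. If $F\not\cong T_r(n)$, then there is a vertex $u\in V(F)$ such that \[ e\bigl(F[N_F(u)]\bigr)>e\bigl(T_{r-1}(d_F(u))\bigr). \]
   Context: $e(\cdot)$ is the number of edges; $N_F(u)$ and $d_F(u)$ are the neighborhood and degree of $u$ in $F$, and $F[X]$ is the induced subgraph. $T_k(m)$ is the complete $k$-partite graph on $m$ vertices with part sizes differing by at most one. The family $\mathcal{F}_r(n)$: write $n=ra+b$ with $0\le b<r$ and $a=\lfloor n/r\rfloor\ge 1$. If $b=0$, $\mathcal{F}_r(n)$ is the set of all $(r-1)a$-regular graphs on $n$ vertices. If $1\le b<r$, $\mathcal{F}_r(n)$ is the set of all graphs $G$ on $n$ vertices having a partition $V(G)=X\sqcup Y$ with $|X|=b(a+1)$, $|Y|=(r-b)a$, such that every vertex of $X$ is adjacent to every vertex of $Y$, $G[X]$ is $(b-1)(a+1)$-regular, and $G[Y]$ is $(r-b-1)a$-regular. *)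

(* Defs.v *)
From mathcomp Require Import all_boot.
Set Implicit Arguments. Unset Strict Implicit. Unset Printing Implicit Defensive.

Definition simple_graph (T : finType) (g : rel T) : Prop :=
  symmetric g /\ irreflexive g.

Definition nbhd (T : finType) (g : rel T) (u : T) : {set T} := [set v | g u v].
Definition deg (T : finType) (g : rel T) (u : T) : nat := #|nbhd g u|.
Definition deg_in (T : finType) (g : rel T) (X : {set T}) (x : T) : nat :=
  #|[set y in X | g x y]|.

Definition edges_in (T : finType) (g : rel T) (A : {set T}) : nat :=
  #|[set E : {set T} | (E \subset A) && (#|E| == 2) &&
       [forall x in E, forall y in E, (x != y) ==> g x y]]|.

(* Turán graph T_k(m) on 'I_m: parts are residue classes mod k,
   so part sizes differ by at most one. *)
Definition turan_rel (k m : nat) : rel 'I_m :=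
  fun i j : 'I_m => (nat_of_ord i %% k != nat_of_ord j %% k).

Definition turan_edges (k m : nat) : nat := edges_in (@turan_rel k m) [set: 'I_m].

Definition iso_turan (T : finType) (g : rel T) (r : nat) : Prop :=
  exists f : T -> 'I_#|T|, bijective f /\
    forall x y, g x y = @turan_rel r #|T| (f x) (f y).

Definition in_family (T : finType) (g : rel T) (r : nat) : Prop :=
  let n := #|T| in
  let a := n %/ r in
  let b := n %% r in
  1 <= a /\
  (if b == 0 then forall u, deg g u = (r - 1) * a
   else exists X : {set T},
     [/\ #|X| = b * (a + 1), #|~: X| = (r - b) * a,
         (forall x y, x \in X -> y \notin X -> g x y),
         (forall x, x \in X -> deg_in g X x = (b - 1) * (a + 1)) &
         (forall y, y \notin X -> deg_in g (~: X) y = (r - b - 1) * a)]).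

(* Main.v *)
Require Import Defs.
From mathcomp Require Import all_boot zify.
Set Implicit Arguments. Unset Strict Implicit. Unset Printing Implicit Defensive.

Lemma handshake (T : finType) (g : rel T) (A : {set T}) :
  simple_graph g ->
  2 * edges_in g A = \sum_(x in A) #|[set y in A | g x y]|.
Proof.
case=> gs gi.
pose P := [set p : T * T | [&& p.1 \in A, p.2 \in A & g p.1 p.2]].
pose E := [set E : {set T} | (E \subset A) && (#|E| == 2) &&
       [forall x in E, forall y in E, (x != y) ==> g x y]].
have -> : \sum_(x in A) #|[set y in A | g x y]| = #|P|.
  rewrite -sum1_card.
  transitivity (\sum_(x in A) \sum_(y in A | g x y) 1).
    by apply: eq_bigr => x _; rewrite -sum1_card; apply: eq_bigl => y; rewrite inE.
  by rewrite pair_big_dep /=; apply: eq_bigl => -[x y]; rewrite !inE /= andbA.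
have -> : edges_in g A = #|E| by [].
have -> : #|P| = \sum_(p in P) 1 by rewrite sum1_card.
rewrite (partition_big (fun p : T * T => [set p.1; p.2]) (mem E)) /=; last first.
  move=> -[p1 p2]; rewrite !inE /= => /and3P[p1A p2A g12].
  have neq : p1 != p2 by apply: contraTneq g12 => ->; rewrite gi.
  rewrite cards2 neq eqxx andbT.
  apply/andP; split.
    by apply/subsetP => z /set2P[] ->.
  apply/forall_inP => z /set2P[]-> ; apply/forall_inP => w /set2P[]-> ;
    rewrite ?eqxx ?g12 ?implybT //=.
  by rewrite -gs g12 implybT.
rewrite -sum1_card big_distrr /=; apply: eq_bigr => e eE.
move: eE; rewrite inE => /andP[/andP[sA /cards2P[x [y [xy ee]]]] /forall_inP Hf].
subst e.
have xA : x \in A by rewrite (subsetP sA) // set21.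
have yA : y \in A by rewrite (subsetP sA) // set22.
have gxy : g x y.
  by have /forall_inP/(_ y (set22 x y)) := Hf x (set21 x y); rewrite xy.
rewrite sum1dep_card (_ : [set i | _] = [set (x, y); (y, x)]); last first.
  apply/setP => -[p1 p2]; rewrite !inE /= !xpair_eqE.
  apply/idP/idP.
    move=> /andP[/and3P[_ _ g12] /eqP eq].
    have p1in : p1 \in [set x; y] by rewrite -eq set21.
    have p2in : p2 \in [set x; y] by rewrite -eq set22.
    have neq : p1 != p2 by apply: contraTneq g12 => ->; rewrite gi.
    move: neq; case/set2P: p1in => ->; case/set2P: p2in => ->;
      by rewrite ?eqxx ?orbT // (negPf xy).
  case/orP => /andP[/eqP-> /eqP->]; rewrite ?xA ?yA ?gxy ?eqxx //=.
  by rewrite gs gxy setUC eqxx.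
rewrite cards2 xpair_eqE.
by case: eqP => // exy; move: xy; rewrite exy eqxx.
Qed.
Lemma card_ord_count n (P : pred nat) :
  #|[set i : 'I_n | P i]| = count P (iota 0 n).
Proof.
rewrite -val_enum_ord count_map cardE /enum_mem size_filter -enumT.
rewrite (@eq_filter _ _ predT) // filter_predT.
by apply: eq_count => i /=; rewrite inE.
Qed.

Lemma count_mod_block k q s (P : pred nat) : s <= k ->
  count (fun i => P (i %% k)) (iota 0 (q * k + s)) =
  q * count P (iota 0 k) + count P (iota 0 s).
Proof.
move=> sk; elim: q => [|q IH].
  rewrite mul0n add0n; apply: eq_in_count => i; rewrite mem_iota /= => lt.
  by rewrite modn_small // (leq_trans lt sk).
rewrite mulSn -addnA iotaD count_cat add0n.
rewrite (_ : iota k (q * k + s) = map (addn k) (iota 0 (q * k + s))); last by rewrite -iotaDl addn0.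
rewrite count_map.
rewrite (eq_count (a2 := fun i => P (i %% k))); last first.
  by move=> i /=; rewrite modnDl.
rewrite IH mulSn -addnA; congr (_ + _).
apply: eq_in_count => i; rewrite mem_iota /= => lt.
by rewrite modn_small.
Qed.

Lemma turan_simple k m : simple_graph (@turan_rel k m).
Proof. split=> [i j|i]; rewrite /turan_rel ?eqxx //. by rewrite eq_sym. Qed.

Lemma count_lt_iota s k : s <= k -> count (fun i => i < s) (iota 0 k) = s.
Proof.
move=> sk; rewrite -(subnKC sk) iotaD count_cat add0n.
rewrite (eq_in_count (a2 := predT)); last by move=> i; rewrite mem_iota.
rewrite count_predT size_iota.
rewrite (eq_in_count (a2 := pred0)); last first.
  by move=> i; rewrite mem_iota /= => /andP[]; rewrite leqNgt => /negPf.
by rewrite count_pred0 addn0.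
Qed.

Lemma count_eq_iota c s : count (fun i => i == c) (iota 0 s) = (c < s).
Proof.
have := count_uniq_mem c (iota_uniq 0 s); rewrite mem_iota add0n /=.
by move=> <-; apply: eq_count => i /=.
Qed.

Lemma turan_formula k q s : 0 < k -> s <= k ->
  2 * turan_edges k (q * k + s) + (q * k + s) * q + s * (q + 1) =
  (q * k + s) * (q * k + s).
Proof.
move=> k0 sk; set m := q * k + s.
rewrite /turan_edges handshake; last exact: turan_simple.
have H : forall i : 'I_m,
    #|[set j in [set: 'I_m] | @turan_rel k m i j]| + (q + (i %% k < s)) = m.
  move=> i.
  have -> : q + (i %% k < s) = #|[set j : 'I_m | j %% k == i %% k]|.
    rewrite (card_ord_count _ (fun j => j %% k == i %% k)) (count_mod_block q (fun c => c == i %% k) sk).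
    by rewrite !count_eq_iota ltn_mod k0 muln1.
  rewrite addnC -[RHS](card_ord m) -(cardsC [set j : 'I_m | j %% k == i %% k]).
  congr (_ + _); apply: eq_card => j; rewrite !inE /turan_rel eq_sym.
  by [].
have Hs : \sum_(i < m) (i %% k < s) = q * s + s.
  rewrite (eq_bigr (fun i : 'I_m => if i %% k < s then 1 else 0)); last first.
    by move=> i _; case: (_ < _).
  rewrite -big_mkcond sum1dep_card (card_ord_count _ (fun i => i %% k < s)).
  rewrite (count_mod_block q (fun c => c < s) sk).
  by rewrite !count_lt_iota.
have E : \sum_(i < m) (#|[set j in [set: 'I_m] | @turan_rel k m i j]| + (q + (i %% k < s)))
   = \sum_(i < m) m by apply: eq_bigr => i _; exact: H i.
rewrite big_split /= big_split /= big_const_ord iter_addn_0 Hs in E.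
rewrite big_const_ord iter_addn_0 in E.
rewrite (eq_bigl (fun i => true)); last by move=> i; rewrite inE.
rewrite -E -addnA; congr (_ + _); lia.
Qed.
Lemma relabel (T1 T2 : finType) (lab1 : T1 -> nat) (lab2 : T2 -> nat) (y0 : T2) :
  #|T1| = #|T2| ->
  (forall c, #|[set x | lab1 x == c]| = #|[set y | lab2 y == c]|) ->
  exists f : T1 -> T2, bijective f /\ forall x, lab2 (f x) = lab1 x.
Proof.
move=> eqc fib.
pose A c := enum [set x | lab1 x == c]; pose B c := enum [set y | lab2 y == c].
pose f x := nth y0 (B (lab1 x)) (index x (A (lab1 x))).
have Ai x : index x (A (lab1 x)) < size (B (lab1 x)).
  by rewrite /B -cardE -fib cardE index_mem /A mem_enum inE.
have fB x : lab2 (f x) = lab1 x.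
  have : f x \in B (lab1 x) by apply: mem_nth.
  by rewrite mem_enum inE => /eqP.
exists f; split; last done.
apply: inj_card_bij; last by rewrite eqc.
move=> x x' eq.
have el : lab1 x = lab1 x' by rewrite -fB eq fB.
have xin : x \in A (lab1 x') by rewrite -el mem_enum inE.
have x'in : x' \in A (lab1 x') by rewrite mem_enum inE.
move: eq; rewrite /f el => /eqP; rewrite nth_uniq ?enum_uniq //; last first.
- by rewrite -el (leq_trans (Ai x)) // el.
- move=> /eqP ei.
  by rewrite -(nth_index x xin) ei nth_index.
Qed.
Lemma sum_le_eq (I : finType) (P : pred I) (F G : I -> nat) :
  (forall i, P i -> F i <= G i) ->
  \sum_(i | P i) G i <= \sum_(i | P i) F i -> forall i, P i -> F i = G i.
Proof.
move=> FG le i Pi.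
have L := @leqif_sum I P (fun i => F i == G i) F G (fun i Pi => leqif_eq (FG i Pi)).
have : \sum_(i | P i) F i == \sum_(i | P i) G i.
  by rewrite eqn_leq le andbT L.
rewrite L => /forall_inP /(_ i Pi) /eqP //.
Qed.

Section G.
Variables (T : finType) (g : rel T).
Hypothesis gs : symmetric g.
Hypothesis gi : irreflexive g.
Local Notation N := (nbhd g).
Local Notation d := (deg g).

Lemma nbhdE u v : (v \in N u) = g u v.
Proof. by rewrite inE. Qed.

Lemma sum_deg_nbhd : \sum_u \sum_(v in N u) d v = \sum_u d u * d u.
Proof.
rewrite (eq_bigr (fun u => \sum_v (if g u v then d v else 0))); last first.
  by move=> u _; rewrite big_mkcond; apply: eq_bigr => v _; rewrite nbhdE.
rewrite exchange_big /=; apply: eq_bigr => v _.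
rewrite -big_mkcond /= -[X in _ = X * _]sum1_card big_distrl /=.
by apply: eq_big => [u|u _]; rewrite ?mul1n // nbhdE gs.
Qed.

Lemma sum_identity :
  \sum_u 2 * edges_in g (N u) + \sum_u \sum_(v in N u) #|N u :|: N v| =
  \sum_u 2 * (d u * d u).
Proof.
rewrite -big_split /=.
transitivity (\sum_u (d u * d u + \sum_(v in N u) d v)).
  apply: eq_bigr => u _; rewrite handshake; last by split.
  rewrite (eq_bigr (fun v => #|N u :&: N v|)); last first.
    by move=> v _; apply: eq_card => w; rewrite !inE.
  rewrite -big_split /= (eq_bigr (fun v => d u + d v)); last first.
    by move=> v _; rewrite addnC cardsUI.
  by rewrite big_split /= sum_nat_const.
rewrite big_split /= sum_deg_nbhd -big_split /=.
by apply: eq_bigr => u _; rewrite mul2n addnn.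
Qed.

End G.

Lemma family_nf (r : nat) (T : finType) (g : rel T) :
  2 <= r -> simple_graph g -> in_family g r ->
  exists a b (X : {set T}),
    #|T| = a * r + b /\ b < r /\ 0 < a /\ #|X| = b * (a + 1) /\
        #|~: X| = (r - b) * a /\
        (forall x y, x \in X -> y \notin X -> g x y) /\
        (forall x, (x \in X -> deg g x + a + 1 = #|T|) /\
                   (x \notin X -> deg g x + a = #|T|)).
Proof.
move=> r2 [gs gi]; rewrite /in_family /=.
have nE := divn_eq #|T| r.
have br : #|T| %% r < r by rewrite ltn_mod; lia.
move: nE br; set a := #|T| %/ r; set b := #|T| %% r => nE br [a1 H].
case: eqP H => [b0 Hd | bn0 [X [cX cY cXY dX dY]]].
  exists a, 0, set0; do !split => //.
  - by rewrite nE b0.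
  - lia.
  - by rewrite cards0.
  - have := cardsC (set0 : {set T}); rewrite cards0 add0n => ->; rewrite nE b0; lia.
  - by move=> x y; rewrite inE.
  - by rewrite inE.
  - by move=> _; rewrite Hd nE b0; lia.
exists a, b, X; do !split => //.
- move=> xX.
  rewrite /deg -(cardsID X (nbhd g x)).
  have -> : #|nbhd g x :&: X| = deg_in g X x.
    by apply: eq_card => y; rewrite !inE andbC.
  have -> : nbhd g x :\: X = ~: X.
    by apply/setP => y; rewrite !inE; case: (boolP (y \in X)) => //= yX; rewrite cXY.
  rewrite dX // cY nE; nia.
- move=> xX; rewrite /deg -(cardsID (~: X) (nbhd g x)).
  have -> : #|nbhd g x :&: ~: X| = deg_in g (~: X) x.
    by apply: eq_card => y; rewrite !inE andbC.
  have -> : nbhd g x :\: ~: X = X.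
    apply/setP => y; rewrite !inE negbK; case: (boolP (y \in X)) => //= yX.
    by rewrite gs cXY.
  rewrite dY // cX nE; nia.
Qed.

Lemma unions_full (r : nat) (T : finType) (g : rel T) a b (X : {set T}) :
  2 <= r -> symmetric g -> irreflexive g ->
  #|T| = a * r + b -> b < r -> 0 < a -> #|X| = b * (a + 1) ->
  #|~: X| = (r - b) * a ->
  (forall x, (x \in X -> deg g x + a + 1 = #|T|) /\
             (x \notin X -> deg g x + a = #|T|)) ->
  (forall u, edges_in g (nbhd g u) <= turan_edges (r - 1) (deg g u)) ->
  forall u v, g u v -> nbhd g u :|: nbhd g v = setT.
Proof.
move=> r2 gs gi nE br a0 cX cY dF Hle.
set n := #|T|.
have fam : \sum_u (2 * turan_edges (r - 1) (deg g u) + n * deg g u) =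
           \sum_u 2 * (deg g u * deg g u).
  have hX : forall u, u \in X -> 2 * turan_edges (r - 1) (deg g u) + n * deg g u
                        = 2 * (deg g u * deg g u) + (r - b) * a.
    move=> u uX.
    have : 0 < #|X| by apply/card_gt0P; exists u.
    rewrite cX => bp.
    have b1 : 0 < b by case: b bp {cX nE br cY} => //.
    have [du _] := dF u; have {}du := du uX.
    have dE : deg g u = a * (r - 1) + (b - 1) by rewrite mulnBr muln1; nia.
    have k0 : 0 < r - 1 by lia.
    have s0 : b - 1 <= r - 1 by lia.
    have TF := @turan_formula _ a _ k0 s0.
    rewrite -dE in TF; nia.
  have hY : forall u, u \notin X -> 2 * turan_edges (r - 1) (deg g u) + n * deg g u
                        + b * (a + 1) = 2 * (deg g u * deg g u).
    move=> u uX.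
    have [_ du] := dF u; have {}du := du uX.
    have dE : deg g u = a * (r - 1) + b by rewrite mulnBr muln1; nia.
    have k0 : 0 < r - 1 by lia.
    have s0 : b <= r - 1 by lia.
    have TF := @turan_formula _ a _ k0 s0.
    rewrite -dE in TF; nia.
  have EX : \sum_(u in X) (2 * turan_edges (r - 1) (deg g u) + n * deg g u)
     = \sum_(u in X) 2 * (deg g u * deg g u) + #|X| * ((r - b) * a).
    by rewrite (eq_bigr _ hX) big_split /= sum_nat_const.
  have EY : \sum_(u | u \notin X) (2 * turan_edges (r - 1) (deg g u) + n * deg g u)
             + #|~: X| * (b * (a + 1)) = \sum_(u | u \notin X) 2 * (deg g u * deg g u).
    have -> : #|~: X| * (b * (a + 1)) = \sum_(u | u \notin X) (b * (a + 1)).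
      by rewrite -sum_nat_const; apply: eq_bigl => u; rewrite inE.
    by rewrite -big_split /=; apply: eq_bigr => u; exact: hY.
  rewrite (bigID (fun u => u \in X)) [RHS](bigID (fun u => u \in X)) /=.
  move: EX EY; rewrite cX cY.
  set s1 := \sum_(u in X) _; set s2 := \sum_(u in X) _.
  set s3 := \sum_(u | _) _; set s4 := \sum_(u | _) _.
  rewrite (mulnC ((r - b) * a)); lia.
have sid := sum_identity gs gi.
have H2 : \sum_u 2 * edges_in g (nbhd g u) <= \sum_u 2 * turan_edges (r - 1) (deg g u).
  by apply: leq_sum => u _; rewrite leq_mul2l Hle orbT.
have Hn : \sum_u n * deg g u = \sum_u \sum_(v in nbhd g u) n.
  by apply: eq_bigr => u _; rewrite sum_nat_const mulnC.
have Hge : \sum_u \sum_(v in nbhd g u) n <=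
           \sum_u \sum_(v in nbhd g u) #|nbhd g u :|: nbhd g v|.
  rewrite -Hn; move: fam sid H2; rewrite big_split /=.
  set s1 := \sum_u (2 * _); set s2 := \sum_u (n * _).
  set s3 := \sum_u (2 * _); set s4 := \sum_u \sum_(v in _) _.
  set s5 := \sum_u (2 * _); lia.
have FG : forall u, true -> \sum_(v in nbhd g u) #|nbhd g u :|: nbhd g v| <=
                             \sum_(v in nbhd g u) n.
  by move=> u _; apply: leq_sum => v _; exact: max_card.
have E1 := @sum_le_eq _ (fun _ => true) _ _ FG Hge.
move=> u v guv.
have E2 := @sum_le_eq _ (fun v => v \in nbhd g u) _ (fun _ => n)
  (fun v _ => max_card (mem (nbhd g u :|: nbhd g v))) (eq_leq (esym (E1 u isT))).
apply/eqP; rewrite eqEcard subsetT cardsT /= (E2 v) //.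
by rewrite inE.
Qed.

Lemma key_prop (T : finType) (g : rel T) :
  symmetric g -> irreflexive g ->
  (forall u v, g u v -> nbhd g u :|: nbhd g v = setT) ->
  forall u w x, ~~ g u w -> g u x = g w x.
Proof.
move=> gs gi H.
have sub : forall u w, ~~ g u w -> forall x, g u x -> g w x.
  move=> u w nuw x gux; have := H u x gux.
  move/setP/(_ w); rewrite !inE (negPf nuw) /= => gxw.
  by rewrite gs gxw.
move=> u w x nuw; apply/idP/idP; first exact: sub.
by apply: sub; rewrite gs.
Qed.

Lemma fiberidx (T : eqType) (s : seq T) (x0 K : T) c :
  uniq s -> K \in s -> c < size s -> (index K s == c) = (K == nth x0 s c).
Proof.
move=> us Ks cs; apply/eqP/eqP => [<-|->]; first by rewrite nth_index.
by rewrite index_uniq.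
Qed.

Lemma iso_from_struct (r : nat) (T : finType) (g : rel T) a b (X : {set T}) :
  2 <= r -> symmetric g -> irreflexive g ->
  #|T| = a * r + b -> b < r -> 0 < a -> #|X| = b * (a + 1) ->
  #|~: X| = (r - b) * a ->
  (forall x y, x \in X -> y \notin X -> g x y) ->
  (forall x, (x \in X -> deg g x + a + 1 = #|T|) /\
             (x \notin X -> deg g x + a = #|T|)) ->
  (forall u w x, ~~ g u w -> g u x = g w x) ->
  iso_turan g r.
Proof.
move=> r2 gs gi nE br a0 cX cY cXY dF key.
pose C u := [set x | ~~ g u x].
have uC u : u \in C u by rewrite inE gi.
have cC u w : (C u == C w) = ~~ g u w.
  apply/eqP/idP => [E | nuw].
    by have := uC w; rewrite -E inE.
  by apply/setP => x; rewrite !inE (key u w x nuw).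
have memC u z : (z \in C u) = (C z == C u) by rewrite cC inE gs.
have cardC u : #|C u| + deg g u = #|T|.
  have -> : C u = ~: nbhd g u by apply/setP => x; rewrite !inE.
  by rewrite /deg addnC cardsC.
have CX x : x \in X -> C x \subset X.
  move=> xX; apply/subsetP => y; rewrite inE; apply: contraR => yX.
  exact: cXY.
have CY y : y \notin X -> C y \subset ~: X.
  move=> yX; apply/subsetP => x; rewrite !inE; apply: contra => xX.
  by rewrite gs cXY.
have szX x : x \in X -> #|C x| = a + 1.
  by move=> xX; have := cardC x; have [+ _] := dF x => /(_ xX); lia.
have szY y : y \notin X -> #|C y| = a.
  by move=> yX; have := cardC y; have [_ +] := dF y => /(_ yX); lia.
have part : forall (D : {set T}) m, (forall x, x \in D -> C x \subset D) ->
    (forall x, x \in D -> #|C x| = m) -> #|D| = #|C @: D| * m.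
  move=> D m sub sz; apply: card_uniform_partition.
    by move=> K /imsetP[x xD ->]; exact: sz.
  apply/and3P; split.
  - rewrite cover_imset; apply/eqP/setP => z; apply/bigcupP/idP.
      by case=> x xD zC; exact: (subsetP (sub x xD)).
    by move=> zD; exists z.
  - apply/trivIsetP => A B /imsetP[x xD ->] /imsetP[y yD ->] neq.
    rewrite disjoint_subset; apply/subsetP => z; rewrite memC => /eqP zx.
    by rewrite inE memC zx.
  - by apply/imsetP => -[x xD E]; have := uC x; rewrite -E inE.
have kX : #|C @: X| = b.
  have := part X (a + 1) CX szX; rewrite cX => /eqP; rewrite eqn_pmul2r ?addn1 //.
  by move=> /eqP.
have kY : #|C @: ~: X| = r - b.
  have h1 : forall y, y \in ~: X -> C y \subset ~: X.
    by move=> y; rewrite inE; exact: CY.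
  have h2 : forall y, y \in ~: X -> #|C y| = a.
    by move=> y; rewrite inE; exact: szY.
  have := part (~: X) a h1 h2; rewrite cY => /eqP; rewrite eqn_pmul2r //.
  by move=> /eqP.
pose sX := enum (C @: X); pose sY := enum (C @: ~: X).
have szsX : size sX = b by rewrite -cardE.
have szsY : size sY = r - b by rewrite -cardE.
have uX : uniq sX := enum_uniq _.
have uY : uniq sY := enum_uniq _.
have inX x : x \in X -> C x \in sX by move=> xX; rewrite mem_enum imset_f.
have inY x : x \notin X -> C x \in sY.
  by move=> xX; rewrite mem_enum imset_f // inE.
have ltX x : x \in X -> index (C x) sX < b by move=> xX; rewrite -szsX index_mem inX.
have ltY x : x \notin X -> index (C x) sY < r - b.
  by move=> xX; rewrite -szsY index_mem inY.
pose lab x := if x \in X then index (C x) sX else b + index (C x) sY.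
have labr x : lab x < r.
  rewrite /lab; case: ifP => xX; first by have := ltX x xX; lia.
  by have := ltY x (negbT xX); lia.
have eqlab x y : (lab x == lab y) = ~~ g x y.
  rewrite /lab; case: ifP => xX; case: ifP => yX.
  - rewrite (fiberidx set0 uX (inX x xX)) ?nth_index ?cC ?inX ?ltX ?szsX //.
    exact: ltX.
  - have -> : g x y by apply: cXY; rewrite ?xX ?yX.
    have := ltX x xX; lia.
  - have -> : g x y by rewrite gs; apply: cXY; rewrite ?xX ?yX.
    have := ltX y yX; lia.
  - rewrite eqn_add2l (fiberidx set0 uY (inY x (negbT xX))) ?nth_index ?cC //.
      by rewrite inY ?yX.
    by rewrite index_mem inY ?yX.
have fib : forall c, #|[set x | lab x == c]| =
                    #|[set i : 'I_#|T| | i %% r == c]|.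
  move=> c; rewrite (card_ord_count _ (fun i => i %% r == c)) nE.
  rewrite (count_mod_block a (fun i => i == c) (ltnW br)) !count_eq_iota.
  case: (ltnP c b) => cb.
    have cr : c < r by lia.
    have Kin : nth set0 sX c \in C @: X by rewrite -mem_enum mem_nth ?szsX.
    case/imsetP: Kin => x0 x0X K0.
    rewrite cr (_ : [set x | lab x == c] = C x0); first by rewrite szX //; lia.
    apply/setP => z; rewrite inE /lab; case: ifP => zX.
      by rewrite (fiberidx set0 uX (inX z zX)) ?szsX // K0 memC.
    have -> : (z \in C x0) = false.
      by apply/negbTE; apply: contraFN zX => zC; exact: (subsetP (CX x0 x0X)).
    by apply/negbTE/eqP; lia.
  case: (ltnP c r) => cr.
    have Kin : nth set0 sY (c - b) \in C @: ~: X.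
      by rewrite -mem_enum mem_nth ?szsY //; lia.
    case/imsetP: Kin => y0; rewrite inE => y0X K0.
    rewrite (_ : [set x | lab x == c] = C y0); first by rewrite szY //; lia.
    apply/setP => z; rewrite inE /lab; case: ifP => zX.
      have -> : (z \in C y0) = false.
        apply/negbTE; apply/negP => zC.
        by have := subsetP (CY y0 y0X) z zC; rewrite inE zX.
      by apply/negbTE/eqP; have := ltX z zX; lia.
    have -> : (b + index (C z) sY == c) = (index (C z) sY == c - b).
      by apply/eqP/eqP; lia.
    by rewrite (fiberidx set0 uY (inY z (negbT zX))) ?szsY ?K0 ?memC //; lia.
  rewrite /= muln0 add0n; apply: eq_card0 => z; rewrite !inE.
  by apply/negbTE; have := labr z; lia.
have n0 : 0 < #|T| by rewrite nE; nia.
have [f [fb fl]] := @relabel T _ lab (fun i : 'I_#|T| => i %% r) (Ordinal n0)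
  (esym (card_ord _)) fib.
exists f; split => // x y.
by rewrite /turan_rel /= !fl eqlab negbK.
Qed.

Theorem lemma3p6 (r : nat) (T : finType) (g : rel T) :
  2 <= r -> simple_graph g -> in_family g r -> ~ iso_turan g r ->
  exists u : T, turan_edges (r - 1) (deg g u) < edges_in g (nbhd g u).
Proof.
move=> r2 sg fam niso.
case: (boolP [exists u, turan_edges (r - 1) (deg g u) < edges_in g (nbhd g u)]).
  by move/existsP.
move/existsPn => Hn; exfalso; apply: niso.
have Hle : forall u, edges_in g (nbhd g u) <= turan_edges (r - 1) (deg g u).
  by move=> u; have := Hn u; rewrite -leqNgt.
have [gs gi] := sg.
have [a [b [X [nE [br [a0 [cX [cY [cXY dF]]]]]]]]] := family_nf r2 sg fam.
have U := unions_full r2 gs gi nE br a0 cX cY dF Hle.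
have K := key_prop gs gi U.
exact: (iso_from_struct r2 gs gi nE br a0 cX cY cXY dF K).
Qed.
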